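(* Let $x,y\in\mathbb{R}[X]$ with $\deg x\le 1$ and $\deg y\le 1$, and let $\gamma\in\mathbb{R}[X]$ be a polynomial without real roots such that $p=x/\gamma$ and $q=y/\gamma$ lie in $D$. Then $\begin{pmatrix} p & q\\ 0 & 0\end{pmatrix}$ is a product of idempotent $2\times 2$ matrices over $D$.
   Context: $D$ denotes the minimal Dress ring of the field $\mathbb{R}(X)$, i.e. the subring of $\mathbb{R}(X)$ generated by $\mathbb{Z}$ and all elements $1/(1+h^2)$ with $h\in\mathbb{R}(X)$. A matrix $E$ is idempotent if $E^2=E$. *)

(* Defs.v *)
From HB Require Import structures.
From Stdlib Require Import Reals ClassicalEpsilon FunctionalExtensionality.
From mathcomp Require Import all_boot all_order all_algebra.
Set Implicit Arguments. Unset Strict Implicit. Unset Printing Implicit Defensive.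
Import GRing.Theory.

Definition realR : Type := R.

Definition realR_eqb (x y : realR) : bool := if Req_EM_T x y then true else false.
Lemma realR_eqP : Equality.axiom realR_eqb.
Proof. move=> x y; rewrite /realR_eqb; case: Req_EM_T => h; constructor; exact h. Qed.
HB.instance Definition _ := hasDecEq.Build realR realR_eqP.

Definition realR_find (P : pred realR) (n : nat) : option realR :=
  match excluded_middle_informative (exists x, P x) with
  | left h => Some (proj1_sig (constructive_indefinite_description _ h))
  | right _ => None
  end.
Lemma realR_find_correct P n x : realR_find P n = Some x -> P x.
Proof.
rewrite /realR_find; case: excluded_middle_informative => // h [<-].
exact: proj2_sig (constructive_indefinite_description _ h).
Qed.
Lemma realR_find_complete (P : pred realR) :
  (exists x, P x) -> exists n, realR_find P n.
Proof. move=> h; exists 0%N; rewrite /realR_find; by case: excluded_middle_informative. Qed.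
Lemma realR_find_ext (P Q : pred realR) : P =1 Q -> realR_find P =1 realR_find Q.
Proof.
move=> h; have -> : P = Q by apply: functional_extensionality.
by [].
Qed.
HB.instance Definition _ := hasChoice.Build realR realR_find_correct
  realR_find_complete realR_find_ext.

Lemma realR_addA : associative (Rplus : realR -> realR -> realR).
Proof. by move=> x y z; rewrite Rplus_assoc. Qed.
Lemma realR_addC : commutative (Rplus : realR -> realR -> realR).
Proof. exact: Rplus_comm. Qed.
Lemma realR_add0 : left_id (R0 : realR) Rplus.
Proof. exact: Rplus_0_l. Qed.
Lemma realR_addN : left_inverse (R0 : realR) Ropp Rplus.
Proof. exact: Rplus_opp_l. Qed.
HB.instance Definition _ := GRing.isZmodule.Build realR realR_addA realR_addC
  realR_add0 realR_addN.

Lemma realR_mulA : associative (Rmult : realR -> realR -> realR).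
Proof. by move=> x y z; rewrite Rmult_assoc. Qed.
Lemma realR_mulC : commutative (Rmult : realR -> realR -> realR).
Proof. exact: Rmult_comm. Qed.
Lemma realR_mul1 : left_id (R1 : realR) Rmult.
Proof. exact: Rmult_1_l. Qed.
Lemma realR_mulDl : left_distributive (Rmult : realR -> realR -> realR) Rplus.
Proof. by move=> x y z; rewrite Rmult_plus_distr_r. Qed.
Lemma realR_one_neq0 : (R1 : realR) != (R0 : realR).
Proof. by apply/eqP; exact: R1_neq_R0. Qed.
HB.instance Definition _ := GRing.Zmodule_isComNzRing.Build realR realR_mulA
  realR_mulC realR_mul1 realR_mulDl realR_one_neq0.

Definition realR_inv (x : realR) : realR := if realR_eqb x R0 then R0 else Rinv x.
Lemma realR_mulV (x : realR) : x != 0%R -> (realR_inv x * x)%R = 1%R.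
Proof.
move=> /eqP h; rewrite /realR_inv; case: realR_eqP => [//|_].
exact: Rinv_l.
Qed.
Lemma realR_inv0 : realR_inv 0%R = 0%R.
Proof. by rewrite /realR_inv; case: realR_eqP. Qed.
HB.instance Definition _ := GRing.ComNzRing_isField.Build realR realR_mulV realR_inv0.

Definition RX : Type := {fraction {poly realR}}.

Local Open Scope ring_scope.

(* The minimal Dress ring D of R(X): the subring of R(X) generated by Z and
   all elements 1/(1+h^2), h in R(X). *)
Inductive dress : RX -> Prop :=
  | dress_one : dress 1
  | dress_gen (h : RX) : dress (1 / (1 + h ^+ 2))
  | dress_add (a b : RX) : dress a -> dress b -> dress (a + b)
  | dress_opp (a : RX) : dress a -> dress (- a)
  | dress_mul (a b : RX) : dress a -> dress b -> dress (a * b).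

Definition mx_over_dress (n : nat) (A : 'M[RX]_n) : Prop := forall i j, dress (A i j).

Definition idempotent_mx (n : nat) (E : 'M[RX]_n) : Prop := E *m E = E.

Definition prod_idempotents_over_dress (n : nat) (A : 'M[RX]_n) : Prop :=
  exists s : seq 'M[RX]_n,
    (forall E, E \in s -> mx_over_dress E /\ idempotent_mx E) /\
    A = foldr (fun E B => E *m B) 1%:M s.

Notation "x %:F" := (@FracField.tofrac _ x) : ring_scope.

(* Main.v *)
Require Import Defs.
From HB Require Import structures.
From Stdlib Require Import Reals Lra Psatz ZArith.
From mathcomp Require Import all_boot all_order all_algebra.
From mathcomp Require Import Rstruct complex.
Import GRing.Theory Num.Theory.
Set Implicit Arguments. Unset Strict Implicit. Unset Printing Implicit Defensive.
Section Helper.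
Local Open Scope R_scope.
Lemma arch_helper (r : R) : exists (N : nat) (w : R), (0 < w /\ w <= 1) /\ r = INR N * (w + w - 1).
Proof.
pose t := Rabs r.
have [hu1 hu2] := archimed t.
have ht : 0 <= t by apply: Rabs_pos.
have hup : Z.le Z0 (up t) by apply: le_IZR; lra.
exists (Z.to_nat (up t)).
have hN : INR (Z.to_nat (up t)) = IZR (up t) by rewrite INR_IZR_INZ Z2Nat.id.
set N := Z.to_nat (up t) in hN *.
have hNp : 0 < INR N by lra.
have hrN : Rabs r < INR N by rewrite hN.
exists ((r / INR N + 1) / 2).
have [ha hb] := Rabs_def2 _ _ hrN.
have eq : r = (r / INR N) * INR N by field; lra.
set q := r / INR N in eq *.
have h1 : q < 1 by nra.
have h2 : -1 < q by nra.
split; first by split; lra.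
rewrite {1}eq; field.
Qed.
End Helper.
From mathcomp Require Import ring zify.
Local Open Scope ring_scope.


Lemma size2_lin (F : nzRingType) (r : {poly F}) : (size r <= 2)%N ->
  r = (r`_0)%:P + (r`_1)%:P * 'X.
Proof.
move=> hs; apply/polyP => i; rewrite coefD coefC coefCM coefX.
case: i => [|[|i]] /=; rewrite ?mulr0 ?mulr1 ?addr0 ?add0r //.
by rewrite nth_default // (leq_trans hs).
Qed.

Arguments size2_lin {F r}.
Local Open Scope complex_scope.
Lemma quad_factor_R (g : {poly R}) : (forall r : R, ~~ root g r) -> (1 < size g)%N ->
  exists (a b : R), b != 0 /\ g = (g %/ (('X - a%:P)^+2 + (b^+2)%:P)) * (('X - a%:P)^+2 + (b^+2)%:P).
Proof.
move=> hr hs.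
pose toC := real_complex R.
pose gC := map_poly toC g.
have hsz : size gC = size g by apply: size_map_inj_poly => //; apply: complexI.
have : size gC != 1%N by rewrite hsz; case: (size g) hs => [|[|]].
move/closed_rootP => [[a b] hz].
have hb : b != 0.
  apply/negP => /eqP hb0; move: hz; rewrite hb0 => hz.
  have := hr a; rewrite /root -(fmorph_eq0 toC) -horner_map.
  by move: hz; rewrite /root /gC /toC /= => ->.
exists a, b; split => //.
set Q0 := (_ + _).
rewrite {1}(divp_eq g Q0); suff -> : g %% Q0 = 0 by rewrite addr0.
set r := g %% Q0.
have hsQ : size Q0 = 3%N.
  rewrite /Q0 size_addl ?size_exp_XsubC // size_polyC.
  by case: (b ^+ 2 != 0).
have hQ0 : Q0 != 0 by rewrite -size_poly_eq0 hsQ.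
have hsr : (size r <= 2)%N by have := ltn_modpN0 g hQ0; rewrite -/r hsQ.
have hQz : (map_poly toC Q0).[a +i* b] = 0.
  rewrite /Q0 rmorphD rmorphXn /= map_polyXsubC map_polyC /=.
  rewrite hornerD hornerC horner_exp hornerXsubC expr2.
  by simpc; rewrite -expr2 addNr.
have hrz : (map_poly toC r).[a +i* b] = 0.
  move: hz; rewrite /root /gC {1}(divp_eq g Q0) -/r rmorphD rmorphM /=.
  by rewrite hornerD hornerM hQz mulr0 add0r => /eqP.
move: hrz; rewrite (size2_lin hsr) rmorphD rmorphM /= map_polyX !map_polyC /=.
rewrite hornerD hornerM hornerX !hornerC.
simpc => -[h0 /eqP h1].
have e1 : r`_1 = 0 by move: h1; rewrite mulf_eq0 (negbTE hb) orbF => /eqP.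
by move: h0; rewrite e1 mul0r addr0 => ->; rewrite mul0r addr0.
Qed.
Local Close Scope complex_scope.

Definition phi (x : realR) : R := x.
Definition psi (x : R) : realR := x.
Fact phi_add : zmod_morphism phi. Proof. by move=> a b. Qed.
Fact phi_mul : monoid_morphism phi. Proof. by split. Qed.
HB.instance Definition _ := GRing.isZmodMorphism.Build realR R phi phi_add.
HB.instance Definition _ := GRing.isMonoidMorphism.Build realR R phi phi_mul.
Fact psi_add : zmod_morphism psi. Proof. by move=> a b. Qed.
Fact psi_mul : monoid_morphism psi. Proof. by split. Qed.
HB.instance Definition _ := GRing.isZmodMorphism.Build R realR psi psi_add.
HB.instance Definition _ := GRing.isMonoidMorphism.Build R realR psi psi_mul.

Lemma quad_factor (g : {poly realR}) : (forall r : realR, ~~ root g r) -> (1 < size g)%N ->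
  exists (a b : realR) (g' : {poly realR}), b != 0 /\ g = g' * (('X - a%:P)^+2 + (b^+2)%:P).
Proof.
move=> hg hs.
pose gR := map_poly phi g.
have hr' : forall r : R, ~~ root gR r.
  by move=> r; rewrite /root -[r]/(phi r) horner_map fmorph_eq0; exact: hg.
have hs' : size gR = size g by apply: size_map_inj_poly => // u v.
have [a [b [hb e]]] := @quad_factor_R gR hr' (eq_ind _ (fun n => (1 < n)%N) hs _ (esym hs')).
exists (psi a), (psi b), (map_poly psi (gR %/ (('X - a%:P)^+2 + (b^+2)%:P))).
split; first by rewrite fmorph_eq0.
have eg : map_poly psi gR = g by rewrite /gR -map_poly_comp; apply: map_poly_id.
rewrite -{1}eg {1}e rmorphM /=; congr (_ * _).
by rewrite rmorphD rmorphXn /= map_polyXsubC map_polyC /= rmorphXn.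
Qed.

Definition cst (r : realR) : RX := (r%:P)%:F.
Lemma cstD a b : cst (a + b) = cst a + cst b. Proof. by rewrite /cst polyCD tofracD. Qed.
Lemma cstM a b : cst (a * b) = cst a * cst b. Proof. by rewrite /cst polyCM tofracM. Qed.
Lemma cstN a : cst (- a) = - cst a. Proof. by rewrite /cst polyCN tofracN. Qed.
Lemma cst1 : cst 1 = 1. Proof. by rewrite /cst tofrac1. Qed.
Lemma cst0 : cst 0 = 0. Proof. by rewrite /cst tofrac0. Qed.
Lemma cst_eq0 a : (cst a == 0) = (a == 0).
Proof. by rewrite /cst tofrac_eq0 polyC_eq0. Qed.
Lemma cstV a : cst (a^-1) = (cst a)^-1.
Proof.
have [->|ha] := eqVneq a 0; first by rewrite invr0 cst0 invr0.
have h : cst a != 0 by rewrite cst_eq0.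
apply: (mulfI h); rewrite -cstM divff // mulfV // cst1.
Qed.

Lemma dress0 : dress 0.
Proof. by have := dress_add dress_one (dress_opp dress_one); rewrite subrr. Qed.
Lemma dress_sub a b : dress a -> dress b -> dress (a - b).
Proof. by move=> ha hb; apply: dress_add => //; apply: dress_opp. Qed.
Lemma dress_nat n : dress n%:R.
Proof.
elim: n => [|n IH]; first exact: dress0.
by rewrite -addn1 natrD; apply: dress_add => //; exact: dress_one.
Qed.

Lemma realR_invE (x : realR) : x != 0 -> x^-1 = Rinv x.
Proof. by rewrite /GRing.inv /= /realR_inv; case: realR_eqP => // -> /eqP. Qed.

Lemma natr_INR n : (n%:R : realR) = INR n.
Proof.
elim: n => [//|n IH]; rewrite -addn1 natrD IH addn1 S_INR //.
Qed.

Lemma dress_unit (w : realR) : Rlt R0 w -> Rle w R1 -> dress (cst w).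
Proof.
move=> h0 h1.
pose h : realR := sqrt (Rminus (Rinv w) R1).
have hh : (h * h : realR) = Rminus (Rinv w) R1.
  rewrite /h; apply: sqrt_sqrt.
  have := Rinv_le_contravar w R1 h0 h1.
  have -> : Rinv R1 = R1 by exact Rinv_1.
  lra.
have := dress_gen (cst h).
have e : (1 + cst h ^+ 2) = cst (Rinv w).
  rewrite expr2 -cstM -cst1 -cstD; congr cst; rewrite hh.
  change (@eq R (Rplus R1 (Rminus (Rinv w) R1)) (Rinv w)); lra.
have wn0 : w != 0 by apply/eqP => e0; have e1 : w = R0 := e0; lra.
have wi0 : (Rinv w : realR) != 0.
  by apply/eqP => e0; apply: (Rinv_neq_0_compat w); [lra| exact e0].
by rewrite e div1r -cstV realR_invE // Rinv_inv.
Qed.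

Lemma cst_nat n : cst n%:R = n%:R.
Proof. by rewrite /cst polyC_natr rmorph_nat. Qed.

Lemma dress_cst (r : realR) : dress (cst r).
Proof.
have [N [w [[h0 h1] e]]] := arch_helper r.
have -> : cst r = N%:R * (cst w + cst w - 1).
  rewrite -cst_nat -cst1 -cstN -!cstD -cstM natr_INR; congr cst; exact: e.
apply: dress_mul; first exact: dress_nat.
apply: dress_sub; last exact: dress_one.
by apply: dress_add; apply: dress_unit.
Qed.

Lemma realR_sq1_neq0 (z : realR) : 1 + z * z != 0.
Proof.
apply/eqP => e; have e' : @eq R (Rplus R1 (Rmult z z)) R0 := e.
have := Rle_0_sqr z; rewrite /Rsqr; lra.
Qed.

Lemma two_neq0 : (2%:R : RX) != 0.
Proof.
rewrite -cst_nat cst_eq0 natr_INR; apply/eqP => e.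
have e' : @eq R (INR 2) R0 := e. by move: e'; rewrite /INR; lra.
Qed.

Lemma frac1sq_neq0 (w : {poly realR}) : 1 + (w%:F)^+2 != 0.
Proof.
rewrite -tofrac1 -tofracXn -tofracD tofrac_eq0; apply/eqP => e.
have := congr1 (horner ^~ 0) e; rewrite hornerD hornerC horner_exp expr2 horner0.
by apply/eqP; apply: realR_sq1_neq0.
Qed.


Lemma I1 (F : fieldType) (W : F) : W + 1 != 0 -> 1 + W^+2 != 0 -> (2%:R : F) != 0 ->
  W / (1 + W^+2) = 1/(1 + ((W-1)/(W+1))^+2) - 1/(1 + 1^+2).
Proof.
move=> h1 h2 h3.
have h4 : 1 + ((W - 1) / (W + 1)) ^+ 2 = (2%:R * (1 + W^+2)) / (W + 1)^+2.
  by field; rewrite h1.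
by rewrite h4; field; rewrite h1 h2 h3.
Qed.

Lemma dress_frac2 (w : {poly realR}) : dress (w%:F / (1 + (w%:F)^+2)).
Proof.
case: (eqVneq (w + 1) 0) => hw.
  have -> : w = -1 by apply/eqP; rewrite -addr_eq0 hw.
  rewrite tofracN tofrac1 sqrrN mulNr; apply: dress_opp; exact: (dress_gen 1).
have h1 := frac1sq_neq0 w.
have h2 : w%:F + 1 != 0 by rewrite -tofrac1 -tofracD tofrac_eq0.
rewrite (I1 h2 h1 two_neq0) -tofrac1 -tofracB -tofracD tofrac1.
apply: dress_sub; exact: dress_gen.
Qed.



Lemma I2 (F : fieldType) (A B V K C : F) : K != 0 -> 1 + V^+2 != 0 ->
  (A + B * (V*K + C)) / (V*K*(V*K) + K^+2) =
  (A + B*C) * (K^+2)^-1 * (1/(1+V^+2)) + B * K^-1 * (V/(1+V^+2)).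
Proof.
move=> h1 h2.
have e : V*K*(V*K) + K^+2 = K^+2 * (1 + V^+2) by ring.
by rewrite e; field; rewrite h1 h2.
Qed.

Lemma cstX a n : cst (a ^+ n) = cst a ^+ n.
Proof. by rewrite /cst rmorphXn tofracXn. Qed.

Lemma dress_quad (c m : realR) (N : {poly realR}) : m != 0 -> (size N <= 2)%N ->
  dress (N%:F / (('X - c%:P)^+2 + (m^+2)%:P)%:F).
Proof.
move=> hm hN.
pose v := ('X - c%:P) * (m^-1)%:P.
have eX : 'X = v * m%:P + c%:P by rewrite /v -mulrA -polyCM mulVf // mulr1 subrK.
clearbody v.
have eQ : ('X - c%:P)^+2 + (m^+2)%:P = (v * m%:P)^+2 + (m^+2)%:P.
  by rewrite {1}eX addrK.
rewrite eQ (size2_lin hN) eX.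
rewrite !(tofracD, tofracM, tofracXn).
rewrite -[(m ^+ 2)%:P%:F]/(cst (m^+2)) cstX.
rewrite -[(m%:P)%:F]/(cst m) -[(c%:P)%:F]/(cst c) -[((N`_0)%:P)%:F]/(cst N`_0).
rewrite -[((N`_1)%:P)%:F]/(cst N`_1).
have hK : cst m != 0 by rewrite cst_eq0.
rewrite (@I2 _ (cst N`_0) (cst N`_1) (v%:F) (cst m) (cst c) hK (frac1sq_neq0 v)).
apply: dress_add; apply: dress_mul.
- apply: dress_mul.
    by apply: dress_add; [exact: dress_cst | apply: dress_mul; exact: dress_cst].
  by rewrite -cstX -cstV; exact: dress_cst.
- exact: dress_gen.
- by apply: dress_mul; [exact: dress_cst | rewrite -cstV; exact: dress_cst].
- exact: dress_frac2.
Qed.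

Lemma I3 (F : fieldType) (A B Gp Q : F) : Gp != 0 -> Q != 0 ->
  (A * Q + B) / (Gp * Q) = A / Gp + (B / Q) * (1 / Gp).
Proof. by move=> h1 h2; field; rewrite h1 h2. Qed.

Lemma dress_key n (g : {poly realR}) : (size g <= n)%N -> (forall r, ~~ root g r) ->
  forall N : {poly realR}, (size N <= size g)%N -> dress (N%:F / g%:F).
Proof.
elim: n g => [|n IH] g hs hg N hN.
  move: hs; rewrite leqn0 size_poly_eq0 => /eqP g0.
  by have := hg 0; rewrite g0 root0.
case: (leqP (size g) 1) => hs1.
  rewrite (size1_polyC hs1) (size1_polyC (leq_trans hN hs1)).
  rewrite -[((N`_0)%:P)%:F]/(cst N`_0) -[((g`_0)%:P)%:F]/(cst g`_0) -cstV -cstM.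
  exact: dress_cst.
have [a [b [g' [hb e]]]] := quad_factor hg hs1.
set Q0 := (_ + _) in e.
have hsQ : size Q0 = 3%N.
  rewrite /Q0 size_addl ?size_exp_XsubC // size_polyC.
  by case: (b ^+ 2 != 0).
have hQ0 : Q0 != 0 by rewrite -size_poly_eq0 hsQ.
have hg' : g' != 0.
  by apply/eqP => g0; have := hg 0; rewrite e g0 mul0r root0.
have hsg : size g = (size g' + 2)%N.
  by rewrite e size_mul // hsQ addnS addn2.
have hg'r : forall r, ~~ root g' r.
  by move=> r; apply/negP => hr; have := hg r; rewrite e rootM hr.
have hsg' : (size g' <= n)%N by move: hs; rewrite hsg; lia.
rewrite e (divp_eq N Q0) tofracD !tofracM I3; last first.
- by rewrite tofrac_eq0.
- by rewrite tofrac_eq0.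
apply: dress_add.
  apply: IH => //.
  by rewrite size_divp // hsQ /= leq_subLR addnC -hsg.
apply: dress_mul.
  apply: dress_quad => //.
  by have := ltn_modpN0 N hQ0; rewrite hsQ.
rewrite -tofrac1; apply: IH => //.
by rewrite size_poly1 lt0n size_poly_eq0.
Qed.


Definition mk2 (R : nzRingType) (a b c d : R) : 'M[R]_2 :=
  \matrix_(i < 2, j < 2) (if i == 0%N :> nat then (if j == 0%N :> nat then a else b)
                          else (if j == 0%N :> nat then c else d)).

Lemma mk2_mul (R : nzRingType) (a b c d a' b' c' d' : R) : mk2 a b c d *m mk2 a' b' c' d' =
  mk2 (a*a' + b*c') (a*b' + b*d') (c*a' + d*c') (c*b' + d*d').
Proof.
apply/matrixP => i j; rewrite !mxE big_ord_recl big_ord1 !mxE /=.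
by case: i => [[|[|i]] hi]; case: j => [[|[|j]] hj].
Qed.

Lemma mk2_1 (R : nzRingType) : (1%:M : 'M[R]_2) = mk2 1 0 0 1.
Proof.
by apply/matrixP => i j; rewrite !mxE; case: i => [[|[|i]] hi]; case: j => [[|[|j]] hj].
Qed.

Lemma mk2_over a b c d : dress a -> dress b -> dress c -> dress d -> mx_over_dress (mk2 a b c d).
Proof.
by move=> ha hb hc hd i j; rewrite mxE; case: i => [[|[|i]] hi]; case: j => [[|[|j]] hj].
Qed.

Lemma Rg1 (R : comRingType) (a b c : R) : a*(1-a) = b*c -> a*a + b*c = a.
Proof. by move=> h; rewrite -h; ring. Qed.
Lemma Rg2 (R : comRingType) (a b : R) : a*b + b*(1-a) = b.
Proof. by ring. Qed.
Lemma Rg3 (R : comRingType) (a c : R) : c*a + (1-a)*c = c.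
Proof. by ring. Qed.
Lemma Rg4 (R : comRingType) (a b c : R) : a*(1-a) = b*c -> c*b + (1-a)*(1-a) = 1 - a.
Proof. by move=> h; rewrite mulrC -h; ring. Qed.

Lemma mk2_idemg (R : comRingType) (a b c d : R) : a + d = 1 -> a * d = b * c ->
  mk2 a b c d *m mk2 a b c d = mk2 a b c d.
Proof.
move=> htr hdet; rewrite mk2_mul.
have hd : d = 1 - a by rewrite -htr addrC addKr.
rewrite hd in hdet *.
congr mk2.
- exact: Rg1.
- exact: Rg2.
- exact: Rg3.
- exact: Rg4.
Qed.

Lemma mk2_idem (a b c d : RX) : a + d = 1 -> a * d = b * c -> idempotent_mx (mk2 a b c d).
Proof. exact: mk2_idemg. Qed.

Lemma Eq0 (R : comRingType) (Q : R) :
  mk2 0 Q 0 0 = mk2 1 0 0 0 *m (mk2 0 Q 0 1 *m 1%:M).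
Proof. by rewrite mk2_1 !mk2_mul; congr mk2; ring. Qed.

Lemma Eq1 (R : comRingType) (P Q k c b : R) : k * c = 1 ->
  mk2 P Q 0 0 = mk2 1 0 0 0 *m (mk2 0 k 0 1 *m (mk2 (1 - c*Q) b (c*P) (c*Q) *m 1%:M)).
Proof.
move=> h; rewrite mk2_1 !mk2_mul; congr mk2; try ring.
- by transitivity ((k*c)*P); [rewrite h mul1r | ring].
- by transitivity ((k*c)*Q); [rewrite h mul1r | ring].
Qed.

Lemma Eq2 (R : comRingType) (P Q k c w : R) : k * c = 1 ->
  mk2 P Q 0 0 = mk2 1 (k - 1) 0 0 *m (mk2 1 0 1 0 *m (mk2 (c*P) (c*Q) w (1 - c*P) *m 1%:M)).
Proof.
move=> h; rewrite mk2_1 !mk2_mul; congr mk2; try ring.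
- by transitivity ((k*c)*P); [rewrite h mul1r | ring].
- by transitivity ((k*c)*Q); [rewrite h mul1r | ring].
Qed.

Lemma scheme0 (Q : RX) : dress Q -> prod_idempotents_over_dress (mk2 0 Q 0 0).
Proof.
move=> hQ; exists [:: mk2 1 0 0 0; mk2 0 Q 0 1]; split; last exact: Eq0.
move=> E; rewrite !inE => /orP [/eqP->|/eqP->]; split.
- by apply: mk2_over; [exact: dress_one|exact: dress0|exact: dress0|exact: dress0].
- by apply: mk2_idemg; [exact: addr0 | rewrite mulr0 mul0r].
- by apply: mk2_over; [exact: dress0|exact: hQ|exact: dress0|exact: dress_one].
- by apply: mk2_idemg; [exact: add0r | rewrite mulr0 mul0r].
Qed.

Lemma scheme1 (P Q k c b : RX) : dress P -> dress Q -> dress k -> dress c -> dress b ->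
  k * c = 1 -> b * (c * P) = (1 - c * Q) * (c * Q) ->
  prod_idempotents_over_dress (mk2 P Q 0 0).
Proof.
move=> hP hQ hk hc hb hkc hdet.
have hcP : dress (c * P) by apply: dress_mul.
have hcQ : dress (c * Q) by apply: dress_mul.
exists [:: mk2 1 0 0 0; mk2 0 k 0 1; mk2 (1 - c * Q) b (c * P) (c * Q)].
split; last exact: Eq1.
move=> E; rewrite !inE => /or3P [/eqP->|/eqP->|/eqP->]; split.
- by apply: mk2_over; [exact: dress_one|exact: dress0|exact: dress0|exact: dress0].
- by apply: mk2_idemg; [exact: addr0 | rewrite mulr0 mul0r].
- by apply: mk2_over; [exact: dress0|exact: hk|exact: dress0|exact: dress_one].
- by apply: mk2_idemg; [exact: add0r | rewrite mulr0 mul0r].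
- by apply: mk2_over => //; apply: dress_sub => //; exact: dress_one.
- by apply: mk2_idemg; [exact: subrK | rewrite hdet].
Qed.

Lemma scheme2 (P Q k c w : RX) : dress P -> dress Q -> dress k -> dress c -> dress w ->
  k * c = 1 -> c * P * (1 - c * P) = c * Q * w ->
  prod_idempotents_over_dress (mk2 P Q 0 0).
Proof.
move=> hP hQ hk hc hw hkc hdet.
have hcP : dress (c * P) by apply: dress_mul.
have hcQ : dress (c * Q) by apply: dress_mul.
exists [:: mk2 1 (k - 1) 0 0; mk2 1 0 1 0; mk2 (c * P) (c * Q) w (1 - c * P)].
split; last exact: Eq2.
move=> E; rewrite !inE => /or3P [/eqP->|/eqP->|/eqP->]; split.
- apply: mk2_over; [exact: dress_one| |exact: dress0|exact: dress0].
  by apply: dress_sub => //; exact: dress_one.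
- by apply: mk2_idemg; [exact: addr0 | rewrite !mulr0].
- by apply: mk2_over; [exact: dress_one|exact: dress0|exact: dress_one|exact: dress0].
- by apply: mk2_idemg; [exact: addr0 | rewrite mulr0 mul0r].
- by apply: mk2_over => //; apply: dress_sub => //; exact: dress_one.
- by apply: mk2_idemg; [rewrite addrC subrK | rewrite hdet].
Qed.

Lemma G1 (F : fieldType) (X0 Y0 G : F) : G != 0 -> X0 != 0 ->
  (Y0 * X0^-1 * (1 - Y0 / G)) * (1 * (X0 / G)) = (1 - 1 * (Y0 / G)) * (1 * (Y0 / G)).
Proof. by move=> h1 h2; field; rewrite h1 h2. Qed.

Lemma G2 (F : fieldType) (P K : F) :
  (K * (1 - K * P)) * (1 * P) = (1 - 1 * (K * P)) * (1 * (K * P)).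
Proof. by ring. Qed.

Lemma G3 (F : fieldType) (X Y G N1 c : F) : G != 0 -> G - c * Y = N1 * X ->
  (Y * N1 / G) * (c * (X / G)) = (1 - c * (Y / G)) * (c * (Y / G)).
Proof.
move=> h1 h2.
have -> : (1 - c * (Y / G)) * (c * (Y / G)) = (G - c * Y) * c * Y / G^+2.
  by field.
by rewrite h2; field.
Qed.

Lemma G4 (F : fieldType) (X Y G N1 c : F) : G != 0 -> G - c * X = N1 * Y ->
  c * (X / G) * (1 - c * (X / G)) = c * (Y / G) * (X * N1 / G).
Proof.
move=> h1 h2.
have -> : c * (X / G) * (1 - c * (X / G)) = (G - c * X) * c * X / G^+2.
  by field.
by rewrite h2; field.
Qed.

Lemma GR (F : fieldType) (x0 x1 : F) : x1 != 0 -> x0 + x1 * - (x0 / x1) = 0.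
Proof. by move=> h; field. Qed.

Lemma lin_root (x : {poly realR}) : size x = 2%N -> exists a, root x a.
Proof.
move=> hs.
have hx1 : x`_1 != 0.
  have : lead_coef x != 0 by rewrite lead_coef_eq0 -size_poly_eq0 hs.
  by rewrite lead_coefE hs.
exists (- (x`_0 / x`_1)).
rewrite /root {1}(size2_lin (eq_leq hs)) hornerD hornerM hornerX !hornerC.
by rewrite GR.
Qed.

Lemma divlin (x f : {poly realR}) a : size x = 2%N -> root x a ->
  f = (f %/ x) * x + (f.[a])%:P.
Proof.
move=> hs hr.
have hx : x != 0 by rewrite -size_poly_eq0 hs.
have hsr : leq (size (f %% x)) 1 by have := ltn_modpN0 f hx; rewrite hs.
rewrite {1}(divp_eq f x); congr (_ + _).
rewrite (size1_polyC hsr); congr polyC.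
have -> : f.[a] = (f %% x).[a].
  by rewrite {1}(divp_eq f x) hornerD hornerM (eqP hr) mulr0 add0r.
by rewrite [in RHS](size1_polyC hsr) hornerC.
Qed.

Theorem corollary3p4 (x y gamma : {poly realR})
  (hx : (size x <= 2)%N) (hy : (size y <= 2)%N)
  (hgamma : forall r : realR, ~~ root gamma r)
  (hp : dress (x%:F / gamma%:F)) (hq : dress (y%:F / gamma%:F)) :
  prod_idempotents_over_dress
    (\matrix_(i < 2, j < 2)
       (if i == 0%N :> nat then (if j == 0%N :> nat then x%:F / gamma%:F else y%:F / gamma%:F)
        else 0) : 'M[RX]_2).
Proof.
have -> : (\matrix_(i < 2, j < 2)
       (if i == 0%N :> nat then (if j == 0%N :> nat then x%:F / gamma%:F else y%:F / gamma%:F)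
        else 0) : 'M[RX]_2) = mk2 (x%:F / gamma%:F) (y%:F / gamma%:F) 0 0.
  by apply/matrixP => i j; rewrite !mxE; case: i => [[|[|i]] hi]; case: j => [[|[|j]] hj].
have hg0 : gamma != 0 by apply/eqP => g0; have := hgamma 0; rewrite g0 root0.
have hG : gamma%:F != 0 by rewrite tofrac_eq0.
have hsg1 : (1 <= size gamma)%N by rewrite lt0n size_poly_eq0.
case: (leqP (size x) 1) => hsx.
  set x0 := x`_0.
  have ex : x = x0%:P := size1_polyC hsx.
  case: (eqVneq x0 0) => hx0.
    have -> : x%:F / gamma%:F = 0 by rewrite ex hx0 tofrac0 mul0r.
    exact: scheme0.
  case: (leqP (size y) 1) => hsy.
    set y0 := y`_0.
    have ey : y = y0%:P := size1_polyC hsy.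
    apply: (@scheme1 _ _ 1 1 (cst (y0 / x0) * (1 - y%:F / gamma%:F)) hp hq).
    - exact: dress_one.
    - exact: dress_one.
    - by apply: dress_mul; [exact: dress_cst | apply: dress_sub => //; exact: dress_one].
    - by rewrite mulr1.
    rewrite ey ex cstM cstV.
    rewrite -[(y0%:P)%:F]/(cst y0) -[(x0%:P)%:F]/(cst x0).
    have hX : cst x0 != 0 by rewrite cst_eq0.
    refine (@G1 _ (cst x0) (cst y0) (gamma%:F) hG hX).
  have hsy2 : size y = 2%N by apply/eqP; rewrite eqn_leq hy hsy.
  have [a ha] := lin_root hsy2.
  pose c := gamma.[a] / x0.
  have hc : c != 0.
    by rewrite /c mulf_neq0 ?invr_eq0 //; exact: hgamma.
  pose N1 := (gamma - c%:P * x) %/ y.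
  have he : gamma - c%:P * x = N1 * y.
    rewrite {1}(divlin (gamma - c%:P * x) hsy2 ha) -/N1.
    rewrite hornerD hornerN hornerM hornerC ex hornerC /c mulfVK // subrr.
    by rewrite addr0.
  apply: (@scheme2 _ _ (cst c^-1) (cst c) ((x * N1)%:F / gamma%:F) hp hq).
  - exact: dress_cst.
  - exact: dress_cst.
  - apply: (@dress_key (size gamma)) => //.
    rewrite ex size_Cmul // /N1 size_divp; last by rewrite -size_poly_eq0 hsy2.
    rewrite hsy2 /= leq_subLR.
    apply: (leq_trans (size_add _ _)); rewrite geq_max leq_addl /= size_opp.
    apply: (leq_trans (size_mul_leq _ _)); rewrite size_polyC ex size_polyC.
    by case: (c != 0); case: (x0 != 0) => //=; rewrite add1n.
  - by rewrite cstV mulVf ?cst_eq0.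
  rewrite [(x * N1)%:F]tofracM; refine (@G4 _ (x%:F) (y%:F) (gamma%:F) (N1%:F) (cst c) hG _).
  by rewrite -[cst c]/((c%:P)%:F) -tofracM -tofracB he tofracM.
have hsx2 : size x = 2%N by apply/eqP; rewrite eqn_leq hx hsx.
have [a ha] := lin_root hsx2.
have ey := divlin y hsx2 ha.
have hsd : leq (size (y %/ x)) 1.
  by rewrite size_divp ?hsx2 /= ?leq_subLR // -size_poly_eq0 hsx2.
move: ey; rewrite (size1_polyC hsd) => ey.
set k0 := (y %/ x)`_0 in ey.
case: (eqVneq y.[a] 0) => hya.
  rewrite hya addr0 in ey.
  have eQ : y%:F / gamma%:F = cst k0 * (x%:F / gamma%:F).
    by rewrite ey tofracM mulrA mulrC -[(k0%:P)%:F]/(cst k0) mulrA [_ * cst k0]mulrC.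
  apply: (@scheme1 _ _ 1 1 (cst k0 * (1 - cst k0 * (x%:F / gamma%:F))) hp hq).
  - exact: dress_one.
  - exact: dress_one.
  - apply: dress_mul; first exact: dress_cst.
    by apply: dress_sub; [exact: dress_one | apply: dress_mul => //; exact: dress_cst].
  - by rewrite mulr1.
  rewrite eQ; refine (@G2 _ _ _).
pose c := gamma.[a] / y.[a].
have hc : c != 0.
  by rewrite /c mulf_neq0 ?invr_eq0 //; exact: hgamma.
pose N1 := (gamma - c%:P * y) %/ x.
have he : gamma - c%:P * y = N1 * x.
  rewrite {1}(divlin (gamma - c%:P * y) hsx2 ha) -/N1.
  rewrite hornerD hornerN hornerM hornerC /c mulfVK // subrr.
  by rewrite addr0.
apply: (@scheme1 _ _ (cst c^-1) (cst c) ((y * N1)%:F / gamma%:F) hp hq).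
- exact: dress_cst.
- exact: dress_cst.
- case: (leqP (size gamma) 1) => hsg.
    have hsN : (size N1 <= 1)%N.
      rewrite /N1 size_divp; last by rewrite -size_poly_eq0 hsx2.
      rewrite hsx2 /= leq_subLR.
      apply: (leq_trans (size_add _ _)); rewrite geq_max size_opp.
      rewrite (leq_trans hsg) //=.
      apply: (leq_trans (size_mul_leq _ _)); rewrite size_polyC.
      by case: (c != 0) => /=; rewrite add0n //; apply: leq_trans (leq_pred _) hy.
    rewrite (size1_polyC hsN) tofracM -[((N1`_0)%:P)%:F]/(cst N1`_0).
    rewrite mulrAC; apply: dress_mul; [exact: hq | exact: dress_cst].
  apply: (@dress_key (size gamma)) => //.
  apply: (leq_trans (size_mul_leq _ _)).
  have hsN : (size N1 <= (size gamma).-1)%N.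
    rewrite /N1 size_divp; last by rewrite -size_poly_eq0 hsx2.
    rewrite hsx2 /= -subn1; apply: leq_sub2r.
    apply: (leq_trans (size_add _ _)); rewrite geq_max leqnn size_opp /=.
    apply: (leq_trans (size_mul_leq _ _)); rewrite size_polyC.
    by case: (c != 0) => /=; rewrite ?add1n ?add0n /=; 
      [apply: leq_trans hy hsg | apply: leq_trans (leq_pred _) (leq_trans hy hsg)].
  move: hsN hy hsg; move: (size N1) (size y) (size gamma) => a1 b1 d1; lia.
- by rewrite cstV mulVf ?cst_eq0.
rewrite [(y * N1)%:F]tofracM; refine (@G3 _ (x%:F) (y%:F) (gamma%:F) (N1%:F) (cst c) hG _).
by rewrite -[cst c]/((c%:P)%:F) -tofracM -tofracB he tofracM.
Qed.
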